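(* Let $\lambda>0$ not be a fusion value. Let $\lambda_1$ be the largest fusion value smaller than $\lambda$ (or $\lambda_1=0$ if none exists), and let $C_1,\dots,C_K$ be the clusters of $\mathbf x^*(\lambda_1)$ (all singletons if $\lambda_1=0$). Let $(\hat{\mathbf x}_1,\dots,\hat{\mathbf x}_K)$ be the minimizer of the reduced problem (R$_\lambda$). Then $\hat{\mathbf x}_k\ne\hat{\mathbf x}_{k'}$ for all $k\ne k'$ in $[K]$.
   Context: Data: $n\ge2$, $d\ge1$, $\mathbf a_1,\dots,\mathbf a_n\in\mathbb R^d$, weights $r_i>0$. For $\lambda\ge0$, (P$_\lambda$): minimize $\frac12\sum_ir_i\|\mathbf x_i-\mathbf a_i\|^2+\lambda\sum_{i<j}r_ir_j\|\mathbf x_i-\mathbf x_j\|$ over $(\mathbb R^d)^n$, unique minimizer $\mathbf x^*(\lambda)$; the clusters of $\mathbf x^*(\lambda)$ are the classes of $i\sim j\iff\mathbf x_i^*(\lambda)=\mathbf x_j^*(\lambda)$. A value $\lambda_0>0$ is a fusion value if there are $i\ne j$ with $\mathbf x_i^*(\lambda_0)=\mathbf x_j^*(\lambda_0)$ but $\mathbf x_i^*(\lambda)\ne\mathbf x_j^*(\lambda)$ for all $\lambda\in[0,\lambda_0)$ (there are finitely many). Given a partition $C_1,\dots,C_K$ of $[n]$, set $r'_k:=\sum_{i\in C_k}r_i$, $\bar{\mathbf a}_k:=\frac1{r'_k}\sum_{i\in C_k}r_i\mathbf a_i$, and the reduced problem (R$_\lambda$): minimize over $\mathbf x_1,\dots,\mathbf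 x_K\in\mathbb R^d$ the function $\frac12\sum_kr'_k\|\mathbf x_k-\bar{\mathbf a}_k\|^2+\lambda\sum_{k<k'}r'_kr'_{k'}\|\mathbf x_k-\mathbf x_{k'}\|$. *)

(* Defs.v *)
From mathcomp Require Import all_boot all_order all_algebra.
From mathcomp Require Import reals.
Set Implicit Arguments. Unset Strict Implicit. Unset Printing Implicit Defensive.
Import Order.TTheory GRing.Theory Num.Theory.
Local Open Scope ring_scope.

Section ConvexClustering.
Variable R : realType.

Definition enorm (d : nat) (v : 'rV[R]_d) : R :=
  Num.sqrt (\sum_(l < d) (v 0 l) ^+ 2).

Definition cc_obj (m d : nat) (y : 'I_m -> 'rV[R]_d) (w : 'I_m -> R) (lam : R)
  (x : 'I_m -> 'rV[R]_d) : R :=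
  2^-1 * \sum_(i < m) w i * (enorm (x i - y i)) ^+ 2
  + lam * \sum_(i < m) \sum_(j < m | (i < j)%N) w i * w j * enorm (x i - x j).

Definition is_cc_min (m d : nat) (y : 'I_m -> 'rV[R]_d) (w : 'I_m -> R)
  (lam : R) (x : 'I_m -> 'rV[R]_d) : Prop :=
  forall z : 'I_m -> 'rV[R]_d, cc_obj y w lam x <= cc_obj y w lam z.

Definition is_fusion_value (n d : nat) (xstar : R -> 'I_n -> 'rV[R]_d)
  (lam0 : R) : Prop :=
  0 < lam0 /\
  exists i j : 'I_n, i != j /\ xstar lam0 i = xstar lam0 j /\
    forall lam, 0 <= lam -> lam < lam0 -> xstar lam i <> xstar lam j.

(* Reduced weights and weighted centroids for a partition given by labels
   c : 'I_n -> 'I_K (cluster C_k = c^-1(k)). *)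
Definition red_weight (n K : nat) (c : 'I_n -> 'I_K) (r : 'I_n -> R)
  (k : 'I_K) : R := \sum_(i < n | c i == k) r i.

Definition red_center (n K d : nat) (c : 'I_n -> 'I_K) (r : 'I_n -> R)
  (a : 'I_n -> 'rV[R]_d) (k : 'I_K) : 'rV[R]_d :=
  (red_weight c r k)^-1 *: \sum_(i < n | c i == k) r i *: a i.

End ConvexClustering.

(* Main.v *)
Require Import Defs.
From mathcomp Require Import all_boot all_order all_algebra.
From mathcomp Require Import reals.
From mathcomp Require Import classical_sets.
From mathcomp Require Import ring lra.
Import Order.TTheory GRing.Theory Num.Theory.
Local Open Scope ring_scope.

Definition dot {R : realType} {d : nat} (u v : 'rV[R]_d) : R :=
  \sum_(l < d) u 0 l * v 0 l.
Definition sq {R : realType} {d : nat} (u : 'rV[R]_d) : R := dot u u.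

Lemma dotC {R : realType} {d : nat} (u v : 'rV[R]_d) : dot u v = dot v u.
Proof. by apply: eq_bigr => l _; rewrite mulrC. Qed.

Lemma dotDl {R : realType} {d : nat} (u v w : 'rV[R]_d) : dot (u + v) w = dot u w + dot v w.
Proof. by rewrite /dot -big_split; apply: eq_bigr => l _; rewrite !mxE mulrDl. Qed.

Lemma dotNl {R : realType} {d : nat} (u w : 'rV[R]_d) : dot (- u) w = - dot u w.
Proof. by rewrite /dot -sumrN; apply: eq_bigr => l _; rewrite !mxE mulNr. Qed.

Lemma dotBl {R : realType} {d : nat} (u v w : 'rV[R]_d) : dot (u - v) w = dot u w - dot v w.
Proof. by rewrite dotDl dotNl. Qed.

Lemma dotZl {R : realType} {d : nat} (c : R) (u w : 'rV[R]_d) : dot (c *: u) w = c * dot u w.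
Proof. by rewrite /dot mulr_sumr; apply: eq_bigr => l _; rewrite !mxE mulrA. Qed.

Lemma dot0l {R : realType} {d : nat} (w : 'rV[R]_d) : dot 0 w = 0.
Proof. by rewrite /dot big1 // => l _; rewrite mxE mul0r. Qed.

Lemma dotDr {R : realType} {d : nat} (u v w : 'rV[R]_d) : dot w (u + v) = dot w u + dot w v.
Proof. by rewrite dotC dotDl !(dotC w). Qed.
Lemma dotBr {R : realType} {d : nat} (u v w : 'rV[R]_d) : dot w (u - v) = dot w u - dot w v.
Proof. by rewrite dotC dotBl !(dotC w). Qed.
Lemma dotZr {R : realType} {d : nat} (c : R) (u w : 'rV[R]_d) : dot w (c *: u) = c * dot w u.
Proof. by rewrite dotC dotZl dotC. Qed.
Lemma dotNr {R : realType} {d : nat} (u w : 'rV[R]_d) : dot w (- u) = - dot w u.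
Proof. by rewrite dotC dotNl dotC. Qed.
Lemma dot0r {R : realType} {d : nat} (w : 'rV[R]_d) : dot w 0 = 0.
Proof. by rewrite dotC dot0l. Qed.

Lemma dot_suml {R : realType} {d : nat} (I : finType) (P : pred I) (f : I -> 'rV[R]_d) w :
  dot (\sum_(i | P i) f i) w = \sum_(i | P i) dot (f i) w.
Proof.
rewrite /dot exchange_big /=; apply: eq_bigr => l _.
by rewrite summxE mulr_suml.
Qed.

Lemma sq_ge0 {R : realType} {d : nat} (u : 'rV[R]_d) : 0 <= sq u.
Proof. by apply: sumr_ge0 => l _; rewrite -expr2 sqr_ge0. Qed.

Lemma sq_eq0 {R : realType} {d : nat} (u : 'rV[R]_d) : sq u = 0 -> u = 0.
Proof.
move=> h; apply/rowP => l; rewrite mxE.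
have /eqP := h; rewrite psumr_eq0; last by move=> i _; rewrite -expr2 sqr_ge0.
move/allP/(_ l (mem_index_enum _)); rewrite implyTb mulf_eq0 orbb.
by move/eqP.
Qed.

Lemma enorm_sq {R : realType} {d : nat} (u : 'rV[R]_d) : enorm u ^+ 2 = sq u.
Proof. by rewrite /enorm sqr_sqrtr //; apply: sq_ge0. Qed.

Lemma enorm_ge0 {R : realType} {d : nat} (u : 'rV[R]_d) : 0 <= enorm u.
Proof. exact: sqrtr_ge0. Qed.

Lemma sqZ {R : realType} {d : nat} c (u : 'rV[R]_d) : sq (c *: u) = c ^+ 2 * sq u.
Proof. by rewrite /sq dotZl dotZr mulrA expr2. Qed.

Lemma sqD {R : realType} {d : nat} (u v : 'rV[R]_d) : sq (u + v) = sq u + 2 * dot u v + sq v.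
Proof. rewrite /sq !dotDl !dotDr (dotC v u); ring. Qed.

Lemma sqB {R : realType} {d : nat} (u v : 'rV[R]_d) : sq (u - v) = sq u - 2 * dot u v + sq v.
Proof. rewrite /sq !dotBl !dotBr (dotC v u); ring. Qed.

Lemma sqN {R : realType} {d : nat} (u : 'rV[R]_d) : sq (- u) = sq u.
Proof. by rewrite /sq dotNl dotNr opprK. Qed.

Lemma enormE {R : realType} {d : nat} (u : 'rV[R]_d) : enorm u = Num.sqrt (sq u).
Proof. by []. Qed.

Lemma enormN {R : realType} {d : nat} (u : 'rV[R]_d) : enorm (- u) = enorm u.
Proof. by rewrite !enormE sqN. Qed.

Lemma enormZ {R : realType} {d : nat} c (u : 'rV[R]_d) : enorm (c *: u) = `|c| * enorm u.
Proof. by rewrite !enormE sqZ sqrtrM ?sqr_ge0 // sqrtr_sqr. Qed.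

Lemma enorm0 {R : realType} {d : nat} : enorm (0 : 'rV[R]_d) = 0.
Proof. by rewrite enormE /sq dot0l sqrtr0. Qed.

Lemma enorm_eq0 {R : realType} {d : nat} (u : 'rV[R]_d) : enorm u = 0 -> u = 0.
Proof. by move=> h; apply: sq_eq0; rewrite -enorm_sq h expr0n. Qed.

Lemma cauchy_schwarz {R : realType} {d : nat} (u v : 'rV[R]_d) : dot u v <= enorm u * enorm v.
Proof.
have hu := enorm_ge0 u; have hv := enorm_ge0 v.
have [u0|upos] := eqVneq (enorm u) 0.
  by rewrite (enorm_eq0 _ u0) dot0l enorm0 mul0r.
have [v0|vpos] := eqVneq (enorm v) 0.
  by rewrite (enorm_eq0 _ v0) dot0r enorm0 mulr0.
have h := sq_ge0 (enorm v *: u - enorm u *: v).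
rewrite sqB !sqZ dotZl dotZr -!enorm_sq in h.
have hp : 0 < enorm u * enorm v by rewrite mulr_gt0 // lt_neqAle eq_sym ?upos ?vpos.
set a := enorm u in h hp hu upos *; set b := enorm v in h hp hv vpos *.
set t := dot u v in h *.
have : (a * b) * (2 * (a * b - t)) >= 0 by move: h; nra.
rewrite pmulr_rge0 // => h2; nra.
Qed.

Lemma enorm_triangle {R : realType} {d : nat} (u v : 'rV[R]_d) : enorm (u + v) <= enorm u + enorm v.
Proof.
have hu := enorm_ge0 u; have hv := enorm_ge0 v; have huv := enorm_ge0 (u + v).
have cs := cauchy_schwarz u v.
have : enorm (u + v) ^+ 2 <= (enorm u + enorm v) ^+ 2.
  rewrite enorm_sq sqD -!enorm_sq; nra.
rewrite ler_pXn2r // ?nnegrE //; lra.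
Qed.

Lemma sq_mid {R : realType} {d : nat} (p q : 'rV[R]_d) :
  sq (2^-1 *: (p + q)) = 2^-1 * sq p + 2^-1 * sq q - 4^-1 * sq (p - q).
Proof. by rewrite sqZ sqD sqB; field. Qed.

Lemma enorm_mid {R : realType} {d : nat} (p q : 'rV[R]_d) :
  enorm (2^-1 *: (p + q)) <= 2^-1 * enorm p + 2^-1 * enorm q.
Proof.
rewrite enormZ ger0_norm ?invr_ge0 ?ler0n // -mulrDr.
by rewrite ler_pM2l ?invr_gt0 ?ltr0n // enorm_triangle.
Qed.

Definition Dq {R : realType} {m d : nat} (y : 'I_m -> 'rV[R]_d) (w : 'I_m -> R)
  (x : 'I_m -> 'rV[R]_d) : R := \sum_(i < m) w i * sq (x i - y i).
Definition Pen {R : realType} {m d : nat} (w : 'I_m -> R)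
  (x : 'I_m -> 'rV[R]_d) : R :=
  \sum_(i < m) \sum_(j < m | (i < j)%N) w i * w j * enorm (x i - x j).
Definition Qd {R : realType} {m d : nat} (w : 'I_m -> R)
  (x z : 'I_m -> 'rV[R]_d) : R := \sum_(i < m) w i * sq (z i - x i).

Lemma cc_objE {R : realType} {m d : nat} (y : 'I_m -> 'rV[R]_d) w lam x :
  cc_obj y w lam x = 2^-1 * Dq y w x + lam * Pen w x.
Proof.
rewrite /cc_obj /Dq /Pen; congr (_ * _ + _).
by apply: eq_bigr => i _; rewrite enorm_sq.
Qed.

Lemma Pen_ge0 {R : realType} {m d : nat} (w : 'I_m -> R) (x : 'I_m -> 'rV[R]_d) :
  (forall i, 0 <= w i) -> 0 <= Pen w x.
Proof.
move=> hw; apply: sumr_ge0 => i _; apply: sumr_ge0 => j _.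
by rewrite !mulr_ge0 ?enorm_ge0.
Qed.

Lemma Dq_ge0 {R : realType} {m d : nat} y (w : 'I_m -> R) (x : 'I_m -> 'rV[R]_d) :
  (forall i, 0 <= w i) -> 0 <= Dq y w x.
Proof. by move=> hw; apply: sumr_ge0 => i _; rewrite mulr_ge0 ?sq_ge0. Qed.

Lemma Qd_ge0 {R : realType} {m d : nat} (w : 'I_m -> R) (x z : 'I_m -> 'rV[R]_d) :
  (forall i, 0 <= w i) -> 0 <= Qd w x z.
Proof. by move=> hw; apply: sumr_ge0 => i _; rewrite mulr_ge0 ?sq_ge0. Qed.

Lemma Qd_eq0 {R : realType} {m d : nat} (w : 'I_m -> R) (x z : 'I_m -> 'rV[R]_d) :
  (forall i, 0 < w i) -> Qd w x z <= 0 -> forall i, z i = x i.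
Proof.
move=> hw hQ i.
have h0 : Qd w x z = 0 by apply/eqP; rewrite eq_le hQ Qd_ge0 // => k; exact/ltW.
have /eqP := h0; rewrite psumr_eq0; last by move=> k _; rewrite mulr_ge0 ?sq_ge0 ?ltW.
move/allP/(_ i (mem_index_enum _)); rewrite implyTb mulf_eq0 (gt_eqF (hw i)) /=.
by move/eqP/sq_eq0/eqP; rewrite subr_eq0 => /eqP.
Qed.

Lemma Qd_term {R : realType} {m d : nat} (w : 'I_m -> R) (x z : 'I_m -> 'rV[R]_d) i :
  (forall i, 0 <= w i) -> w i * sq (z i - x i) <= Qd w x z.
Proof.
move=> hw; rewrite /Qd (bigD1 i) //= lerDl.
by apply: sumr_ge0 => k _; rewrite mulr_ge0 ?sq_ge0.
Qed.

Lemma strong_cvx {R : realType} {m d : nat} (y : 'I_m -> 'rV[R]_d) w lam x :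
  (forall i, 0 <= w i) -> 0 <= lam -> is_cc_min y w lam x ->
  forall z, Qd w x z / 4 <= cc_obj y w lam z - cc_obj y w lam x.
Proof.
move=> hw hl hmin z.
pose mm := fun i => 2^-1 *: (x i + z i).
have h1 := hmin mm.
have hD : Dq y w mm = 2^-1 * Dq y w x + 2^-1 * Dq y w z - 4^-1 * Qd w x z.
  rewrite /Dq /Qd !mulr_sumr -big_split -sumrB /=; apply: eq_bigr => i _.
  have -> : mm i - y i = 2^-1 *: ((x i - y i) + (z i - y i)).
    by apply/rowP => l; rewrite /mm !mxE; field.
  have -> : z i - x i = - ((x i - y i) - (z i - y i)).
    by apply/rowP => l; rewrite !mxE; ring.
  rewrite sq_mid sqN; ring.
have hP : Pen w mm <= 2^-1 * Pen w x + 2^-1 * Pen w z.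
  rewrite /Pen !mulr_sumr -big_split; apply: ler_sum => i _.
  rewrite !mulr_sumr -big_split; apply: ler_sum => j _.
  have -> : mm i - mm j = 2^-1 *: ((x i - x j) + (z i - z j)).
    by apply/rowP => l; rewrite /mm !mxE; field.
  have hwij : 0 <= w i * w j by rewrite mulr_ge0.
  have := enorm_mid (x i - x j) (z i - z j).
  move=> h; apply: le_trans (ler_wpM2l hwij h) _.
  by rewrite mulrDr !mulrA !(mulrC _ (2^-1)) !mulrA.
move: h1; rewrite !cc_objE hD => h1.
have := ler_wpM2l hl hP; nra.
Qed.

Lemma dot_sumr {R : realType} {d : nat} (I : finType) (P : pred I) (f : I -> 'rV[R]_d) w :
  dot w (\sum_(i | P i) f i) = \sum_(i | P i) dot w (f i).
Proof. by rewrite dotC dot_suml; apply: eq_bigr => i _; rewrite dotC. Qed.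

Lemma sym_pairs {R : realType} {m : nat} (A : 'I_m -> 'I_m -> R) :
  (forall i, A i i = 0) ->
  \sum_(i < m) \sum_(j < m | (i < j)%N) (A i j + A j i) = \sum_(i < m) \sum_(j < m) A i j.
Proof.
move=> h0.
have split3 : forall i, \sum_(j < m) A i j =
   \sum_(j < m | (i < j)%N) A i j + \sum_(j < m | (j < i)%N) A i j.
  move=> i; rewrite (bigID (fun j : 'I_m => (i < j)%N)) /=; congr (_ + _).
  rewrite (bigID (fun j : 'I_m => (j < i)%N)) /= [X in _ + X]big1 ?addr0.
    apply: eq_bigl => j; case h: (j < i)%N; rewrite ?andbT ?andbF //.
    by rewrite -leqNgt ltnW.
  move=> j /andP[]; rewrite -leqNgt -leqNgt => h1 h2.
  have -> : j = i by apply/val_inj/eqP; rewrite eqn_leq h1 h2.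
  exact: h0.
under [RHS]eq_bigr => i _ do rewrite split3.
rewrite big_split /=; under eq_bigr => i _ do rewrite big_split /=.
rewrite big_split /=; congr (_ + _).
by rewrite (exchange_big_dep xpredT) //=.
Qed.

Lemma zero_lin {R : realType} {m d : nat} (r : 'I_m -> R) (x del : 'I_m -> 'rV[R]_d) :
  (forall i, 0 < r i) ->
  (forall p, \sum_(j < m | x j == p) r j *: del j = 0) ->
  forall V : 'rV[R]_d -> 'rV[R]_d, \sum_(i < m) r i * dot (del i) (V (x i)) = 0.
Proof.
move=> hr hm V.
pose W p := \sum_(j < m | x j == p) r j.
have Wpos : forall i, 0 < W (x i).
  move=> i; rewrite /W (bigD1 i) /=; last by [].
  apply: (lt_le_trans (hr i)); rewrite lerDl.
  by apply: sumr_ge0 => j _; exact/ltW.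
have one : forall i, \sum_(j < m | x j == x i) (r j / W (x i)) = 1.
  by move=> i; rewrite -mulr_suml -/(W (x i)) mulfV // gt_eqF // Wpos.
transitivity (\sum_(i < m) \sum_(j < m | x j == x i) (r j / W (x i)) * (r i * dot (del i) (V (x i)))).
  by apply: eq_bigr => i _; rewrite -mulr_suml one mul1r.
rewrite (exchange_big_dep xpredT) //=; apply: big1 => j _.
transitivity (\sum_(i < m | x i == x j) (r j / W (x j)) * dot (r i *: del i) (V (x j))).
  apply: eq_big => i; first by rewrite eq_sym.
  by move/eqP => ->; rewrite dotZl.
by rewrite -mulr_sumr -dot_suml hm dot0l mulr0.
Qed.

Lemma zero_pair {R : realType} {m d : nat} (r : 'I_m -> R) (x del : 'I_m -> 'rV[R]_d)
  (G : 'rV[R]_d -> 'rV[R]_d -> 'rV[R]_d) :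
  (forall i, 0 < r i) ->
  (forall p, \sum_(j < m | x j == p) r j *: del j = 0) ->
  (forall p q, G p q = - G q p) ->
  \sum_(i < m) \sum_(j < m | (i < j)%N) r i * r j * dot (del i - del j) (G (x i) (x j)) = 0.
Proof.
move=> hr hm hG.
have G0 : forall p, G p p = 0.
  move=> p; apply/rowP => l; have := congr1 (fun v : 'rV[R]_d => v 0 l) (hG p p).
  rewrite /= !mxE; lra.
pose A i j := r i * r j * dot (del i) (G (x i) (x j)).
transitivity (\sum_(i < m) \sum_(j < m | (i < j)%N) (A i j + A j i)).
  apply: eq_bigr => i _; apply: eq_bigr => j _.
  rewrite /A dotBl (hG (x j) (x i)) dotNr; ring.
rewrite sym_pairs; last by move=> i; rewrite /A G0 dot0r mulr0.
rewrite -[X in _ = X](zero_lin r x del hr hm (fun p => \sum_(j < m) r j *: G p (x j))).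
apply: eq_bigr => i _; rewrite dot_sumr mulr_sumr; apply: eq_bigr => j _.
by rewrite /A dotZr mulrA.
Qed.

Definition unitv {R : realType} {d : nat} (v : 'rV[R]_d) : 'rV[R]_d := (enorm v)^-1 *: v.

Lemma unitvN {R : realType} {d : nat} (v : 'rV[R]_d) : unitv (- v) = - unitv v.
Proof. by rewrite /unitv enormN scalerN. Qed.

Lemma unitv0 {R : realType} {d : nat} : unitv (0 : 'rV[R]_d) = 0.
Proof. by rewrite /unitv scaler0. Qed.

Lemma dot_unit {R : realType} {d : nat} (v : 'rV[R]_d) : dot v (unitv v) = enorm v.
Proof.
rewrite /unitv dotZr -/(sq v) -enorm_sq.
have [->|h] := eqVneq (enorm v) 0; first by rewrite invr0 mul0r.
by rewrite expr2 mulrA mulVf // mul1r.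
Qed.

Lemma enorm_unit_le1 {R : realType} {d : nat} (v : 'rV[R]_d) : enorm (unitv v) <= 1.
Proof.
rewrite /unitv enormZ ger0_norm ?invr_ge0 ?enorm_ge0 //.
have [->|h] := eqVneq (enorm v) 0; first by rewrite invr0 mul0r ler01.
by rewrite mulVf.
Qed.

Lemma jensen1 {R : realType} {d : nat} (u w : 'rV[R]_d) :
  enorm u + dot w (unitv u) <= enorm (u + w).
Proof.
rewrite -{1}(dot_unit u) -dotDl.
apply: le_trans (cauchy_schwarz _ _) _.
have h1 := enorm_unit_le1 u; have h2 := enorm_ge0 (u + w).
by rewrite ler_piMr.
Qed.

Lemma pert {R : realType} {d : nat} (v w : 'rV[R]_d) (eps : R) : 0 < eps ->
  enorm (v + eps *: w) <= enorm v + eps * dot w (unitv v) +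
    (if v == 0 then eps * enorm w else eps ^+ 2 * (sq w / (2 * enorm v))).
Proof.
move=> he; have [->|hv] := eqVneq v 0.
  by rewrite add0r unitv0 dot0r enorm0 mulr0 !add0r enormZ ger0_norm // ltW.
set e := enorm v.
have epos : 0 < e.
  rewrite lt_neqAle enorm_ge0 andbT; apply/eqP => h.
  by move/eqP: hv; apply; apply: (enorm_eq0 v); rewrite -/e -h.
have hL : enorm (v + eps *: w) ^+ 2 = e ^+ 2 + 2 * eps * dot v w + eps ^+ 2 * sq w.
  rewrite enorm_sq sqD sqZ dotZr enorm_sq; ring.
have hD : dot w (unitv v) = dot v w / e by rewrite /unitv dotZr dotC mulrC.
rewrite hD.
set s := e + eps * (dot v w / e) + eps ^+ 2 * (sq w / (2 * e)).
have key : 2 * e * s = e ^+ 2 + enorm (v + eps *: w) ^+ 2.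
  rewrite hL /s; field; exact: lt0r_neq0.
have key2 : s ^+ 2 = enorm (v + eps *: w) ^+ 2 + (s - e) ^+ 2.
  have -> : enorm (v + eps *: w) ^+ 2 = 2 * e * s - e ^+ 2 by rewrite key; ring.
  ring.
have hL0 := enorm_ge0 (v + eps *: w).
have spos : 0 < s.
  have : 0 < 2 * e * s by rewrite key; nra.
  by rewrite pmulr_rgt0 // mulr_gt0.
rewrite -/s.
have h : enorm (v + eps *: w) ^+ 2 <= s ^+ 2 by rewrite key2 lerDl sqr_ge0.
nra.
Qed.

Lemma lin_quad {R : realType} (A B : R) : 0 <= B ->
  (forall eps, 0 < eps -> 0 <= eps * A + eps ^+ 2 * B) -> 0 <= A.
Proof.
move=> hB h; rewrite leNgt; apply/negP => hA.
have he : 0 < - A / (B + 1) by rewrite divr_gt0 // ?oppr_gt0 //; lra.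
have := h _ he.
have -> : - A / (B + 1) * A + (- A / (B + 1)) ^+ 2 * B
          = (- A / (B + 1)) * (A * (1 / (B + 1))) by field; lra.
rewrite pmulr_rge0 // => h2.
have : A * (1 / (B + 1)) < 0 by rewrite pmulr_llt0 // divr_gt0 //; lra.
lra.
Qed.

Lemma nosplit {R : realType} {m d : nat} (a : 'I_m -> 'rV[R]_d) (r : 'I_m -> R)
  (hr : forall i, 0 < r i) (mu mu' : R) (x y : 'I_m -> 'rV[R]_d) :
  0 <= mu -> mu <= mu' -> is_cc_min a r mu x -> is_cc_min a r mu' y ->
  forall i j, x i = x j -> y i = y j.
Proof.
move=> hmu hmumu' hx hy.
have hr0 : forall i, 0 <= r i by move=> i; exact/ltW.
pose W p := \sum_(j < m | x j == p) r j.
pose S p := \sum_(j < m | x j == p) r j *: y j.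
pose M p := (W p)^-1 *: S p.
pose yb i := M (x i).
pose del i := y i - yb i.
have hm : forall p, \sum_(j < m | x j == p) r j *: del j = 0.
  move=> p; transitivity (S p - W p *: M p).
    rewrite /S /W scaler_suml -sumrB; apply: eq_bigr => j /eqP hj.
    by rewrite /del /yb hj scalerBr.
  rewrite /M scalerA.
  have [W0|Wn0] := eqVneq (W p) 0.
    rewrite W0 mul0r scale0r subr0 /S big1 // => j hj.
    have /eqP := W0; rewrite psumr_eq0 // => /allP /(_ j (mem_index_enum _)).
    by rewrite hj implyTb => /eqP ->; rewrite scale0r.
  by rewrite mulfV // scale1r subrr.
pose Pw := \sum_(i < m) \sum_(j < m | (i < j)%N)
             r i * r j * (if x i == x j then enorm (del i - del j) else 0).
have Pw0 : 0 <= Pw.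
  apply: sumr_ge0 => i _; apply: sumr_ge0 => j _.
  by case: ifP => _; rewrite ?mulr0 // !mulr_ge0 ?enorm_ge0.
pose Bq := \sum_(i < m) \sum_(j < m | (i < j)%N)
             r i * r j * (if x i == x j then 0
                          else sq (del i - del j) / (2 * enorm (x i - x j))).
have Bq0 : 0 <= Bq.
  apply: sumr_ge0 => i _; apply: sumr_ge0 => j _.
  case: ifP => _; rewrite ?mulr0 // !mulr_ge0 ?sq_ge0 //.
  by rewrite invr_ge0 mulr_ge0 ?ler0n ?enorm_ge0.
pose Sd := \sum_(i < m) r i * dot (del i) (x i - a i).
pose Ss := \sum_(i < m) r i * sq (del i).
have Ss0 : 0 <= Ss by apply: sumr_ge0 => i _; rewrite mulr_ge0 ?sq_ge0.
have hA : 0 <= Sd + mu * Pw.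
  apply: (@lin_quad R _ (2^-1 * Ss + mu * Bq)).
    by rewrite addr_ge0 ?mulr_ge0 // invr_ge0 ler0n.
  move=> eps he.
  pose z i := x i + eps *: del i.
  have hz := hx z; rewrite !cc_objE in hz.
  have hDz : Dq a r z = Dq a r x + eps * (2 * Sd) + eps ^+ 2 * Ss.
    rewrite /Dq /Sd /Ss !mulr_sumr -!big_split; apply: eq_bigr => i _ /=.
    have -> : z i - a i = (x i - a i) + eps *: del i.
      by rewrite /z addrAC.
    rewrite sqD sqZ dotZr dotC; ring.
  have hPz : Pen r z <= Pen r x + eps * Pw + eps ^+ 2 * Bq.
    pose Z := \sum_(i < m) \sum_(j < m | (i < j)%N)
              r i * r j * dot (del i - del j) (unitv (x i - x j)).
    have Z0 : Z = 0.
      apply: (zero_pair r x del (fun p q => unitv (p - q)) hr hm).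
      by move=> p q; rewrite -unitvN opprB.
    apply: (@le_trans _ _ (Pen r x + eps * Z + eps * Pw + eps ^+ 2 * Bq)); last first.
      by rewrite Z0 mulr0 addr0.
    rewrite /Pen /Z /Pw /Bq !mulr_sumr -!big_split; apply: ler_sum => i _ /=.
    rewrite !mulr_sumr -!big_split; apply: ler_sum => j _ /=.
    have -> : z i - z j = (x i - x j) + eps *: (del i - del j).
      by apply/rowP => l; rewrite /z !mxE; ring.
    have hrr : 0 <= r i * r j by rewrite mulr_ge0.
    have := pert (x i - x j) (del i - del j) _ he.
    rewrite subr_eq0 => h; apply: le_trans (ler_wpM2l hrr h) _.
    by case: ifP => _; rewrite ?mulr0 le_eqVlt; apply/orP; left; apply/eqP; ring.
  have := ler_wpM2l hmu hPz.
  move: hz; rewrite hDz; nra.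
have hDy : Dq a r y = Dq a r yb + 2 * Sd + Ss.
  have Z1 := zero_lin r x del hr hm M.
  have Z2 := zero_lin r x del hr hm id.
  have -> : Sd = \sum_(i < m) r i * dot (del i) (yb i - a i).
    rewrite /Sd.
    transitivity (\sum_(i < m) r i * dot (del i) (yb i - a i)
                  + \sum_(i < m) r i * dot (del i) (id (x i))
                  - \sum_(i < m) r i * dot (del i) (M (x i))).
      rewrite -big_split -sumrB; apply: eq_bigr => i _ /=.
      rewrite /yb !dotBr; ring.
    by rewrite Z1 Z2 addr0 subr0.
  rewrite /Dq /Ss mulr_sumr -!big_split; apply: eq_bigr => i _ /=.
  have -> : y i - a i = (yb i - a i) + del i by apply/rowP => l; rewrite /del !mxE; ring.
  rewrite [sq (_ + del i)]sqD dotC; ring.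
have hPy : Pen r yb + Pw <= Pen r y.
  pose Z := \sum_(i < m) \sum_(j < m | (i < j)%N)
            r i * r j * dot (del i - del j) (unitv (M (x i) - M (x j))).
  have Z0 : Z = 0.
    apply: (zero_pair r x del (fun p q => unitv (M p - M q)) hr hm).
    by move=> p q; rewrite -unitvN opprB.
  apply: (@le_trans _ _ (Pen r yb + Pw + Z)); first by rewrite Z0 addr0.
  rewrite /Pen /Z /Pw -!big_split; apply: ler_sum => i _ /=.
  rewrite -!big_split; apply: ler_sum => j _ /=.
  have hrr : 0 <= r i * r j by rewrite mulr_ge0.
  rewrite -!mulrDr; apply: ler_wpM2l => //.
  have hyij : y i - y j = (yb i - yb j) + (del i - del j).
    by apply/rowP => l; rewrite /del !mxE; ring.
  case: ifP => [/eqP hxij|_].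
    have e0 : yb i - yb j = 0 by rewrite /yb hxij subrr.
    by rewrite hyij e0 add0r enorm0 unitv0 dot0r addr0 add0r.
  by rewrite addr0 hyij; apply: jensen1.
have hyb := hy yb; rewrite !cc_objE hDy in hyb.
have h1 := ler_wpM2l (le_trans hmu hmumu') hPy.
have h2 := ler_wpM2r Pw0 hmumu'.
have hSs : Ss <= 0 by nra.
have hQ : Qd r yb y <= 0 by [].
move=> i j hij.
by rewrite (Qd_eq0 _ _ _ hr hQ i) (Qd_eq0 _ _ _ hr hQ j) /yb hij.
Qed.


Lemma Qd_sym {R : realType} {m d : nat} (w : 'I_m -> R) (x z : 'I_m -> 'rV[R]_d) :
  Qd w x z = Qd w z x.
Proof. by apply: eq_bigr => i _; rewrite -sqN opprB. Qed.

Lemma P_bound {R : realType} {m d : nat} (a : 'I_m -> 'rV[R]_d) (r : 'I_m -> R)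
  (hr : forall i, 0 < r i) (mu : R) (x : 'I_m -> 'rV[R]_d) :
  0 <= mu -> is_cc_min a r mu x -> Pen r x <= Pen r a.
Proof.
move=> hmu hx.
have hr0 : forall i, 0 <= r i by move=> i; exact/ltW.
have Da : Dq a r a = 0 by apply: big1 => i _; rewrite subrr /sq dot0l mulr0.
have hDx := Dq_ge0 a r x hr0.
have [mu0|mupos] := eqVneq mu 0.
  have hs := strong_cvx a r mu x hr0 hmu hx a.
  rewrite !cc_objE Da mu0 !mul0r !addr0 mulr0 in hs.
  have hQ : Qd r x a <= 0.
    have := Qd_ge0 r x a hr0; nra.
  have ex : forall i, a i = x i := Qd_eq0 _ _ _ hr hQ.
  rewrite /Pen le_eqVlt; apply/orP; left; apply/eqP.
  by apply: eq_bigr => i _; apply: eq_bigr => j _; rewrite !ex.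
have mup : 0 < mu by rewrite lt_neqAle eq_sym mupos.
have := hx a; rewrite !cc_objE Da mulr0 add0r => h.
have h2 : mu * Pen r x <= mu * Pen r a by nra.
by rewrite ler_pM2l in h2.
Qed.

Lemma Q_cont {R : realType} {m d : nat} (a : 'I_m -> 'rV[R]_d) (r : 'I_m -> R)
  (hr : forall i, 0 < r i) (mu mu' : R) (x x' : 'I_m -> 'rV[R]_d) :
  0 <= mu -> mu <= mu' -> is_cc_min a r mu x -> is_cc_min a r mu' x' ->
  Qd r x x' <= 2 * (mu' - mu) * Pen r a.
Proof.
move=> hmu hmm hx hx'.
have hr0 : forall i, 0 <= r i by move=> i; exact/ltW.
have hmu' : 0 <= mu' by apply: le_trans hmm.
have h1 := strong_cvx a r mu x hr0 hmu hx x'.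
have h2 := strong_cvx a r mu' x' hr0 hmu' hx' x.
rewrite Qd_sym in h2; rewrite !cc_objE in h1 h2.
have p1 := P_bound a r hr mu x hmu hx; have p2 := P_bound a r hr mu' x' hmu' hx'.
have p3 := Pen_ge0 r x' hr0.
have : (mu' - mu) * (Pen r x - Pen r x') <= (mu' - mu) * Pen r a.
  by apply: ler_wpM2l; lra.
nra.
Qed.

Lemma sep {R : realType} {m d : nat} (a : 'I_m -> 'rV[R]_d) (r : 'I_m -> R)
  (hr : forall i, 0 < r i) (xs : R -> 'I_m -> 'rV[R]_d)
  (hxs : forall lam, 0 <= lam -> is_cc_min a r lam (xs lam)) (i j : 'I_m) (mu0 : R) :
  0 <= mu0 -> xs mu0 i <> xs mu0 j ->
  exists2 eps, 0 < eps & forall mu, 0 <= mu -> mu0 - eps < mu -> mu < mu0 + eps ->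
    xs mu i <> xs mu j.
Proof.
move=> hmu0 hne.
have hr0 : forall i, 0 <= r i by move=> k; exact/ltW.
set h := enorm (xs mu0 i - xs mu0 j).
have hpos : 0 < h.
  rewrite lt_neqAle enorm_ge0 andbT; apply/eqP => e; apply: hne.
  by apply/eqP; rewrite -subr_eq0; apply/eqP/(enorm_eq0 _); rewrite -/h -e.
set Pa := Pen r a.
have Pa0 : 0 <= Pa by apply: Pen_ge0.
have ri := hr i; have rj := hr j.
set eps := r i * r j * h ^+ 2 / (4 * (r i + r j) * (Pa + 1)).
have epos : 0 < eps.
  by rewrite /eps divr_gt0 // ?mulr_gt0 // ?exprn_gt0 //; lra.
exists eps => // mu hmu hlo hhi hfus.
set Q := Qd r (xs mu0) (xs mu).
have hQ : Q <= 2 * `|mu - mu0| * Pa.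
  have [le|lt] := leP mu0 mu.
    rewrite /Q ger0_norm ?subr_ge0 //.
    by apply: (Q_cont a r hr mu0 mu) => //; apply: hxs.
  rewrite /Q Qd_sym ler0_norm ?opprB; last by rewrite subr_le0 ltW.
  by apply: (Q_cont a r hr mu mu0) => //; [exact: ltW| apply: hxs| apply: hxs].
have hQi : r i * sq (xs mu i - xs mu0 i) <= Q by apply: Qd_term.
have hQj : r j * sq (xs mu j - xs mu0 j) <= Q by apply: Qd_term.
set Di := xs mu i - xs mu0 i; set Dj := xs mu j - xs mu0 j.
have hDij : xs mu0 i - xs mu0 j = Dj - Di.
  by rewrite /Di /Dj hfus; apply/rowP => l; rewrite !mxE; ring.
have tri : h <= enorm Dj + enorm Di.
  by rewrite /h hDij -(enormN Di); apply: enorm_triangle.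
have ei := enorm_ge0 Di; have ej := enorm_ge0 Dj.
have h2 : h ^+ 2 <= 2 * (sq Di + sq Dj).
  rewrite -!enorm_sq.
  have t2 : h * h <= (enorm Dj + enorm Di) * (enorm Dj + enorm Di).
    by apply: ler_pM => //; exact: ltW.
  have := sqr_ge0 (enorm Dj - enorm Di); nra.
have sqi := sq_ge0 Di; have sqj := sq_ge0 Dj.
have h3 : r i * r j * h ^+ 2 <= 2 * (r i + r j) * Q.
  have : r i * r j * h ^+ 2 <= r i * r j * (2 * (sq Di + sq Dj)).
    by apply: ler_wpM2l => //; rewrite mulr_ge0 // ltW.
  move=> h4; apply: le_trans h4 _.
  have e1 : r j * (r i * sq Di) <= r j * Q by apply: ler_wpM2l => //; exact: ltW.
  have e2 : r i * (r j * sq Dj) <= r i * Q by apply: ler_wpM2l => //; exact: ltW.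
  nra.
have habs : `|mu - mu0| < eps.
  rewrite ltr_norml; apply/andP; split; lra.
have h5 : 2 * (r i + r j) * Q <= 4 * (r i + r j) * (`|mu - mu0| * Pa).
  have : 0 <= 2 * (r i + r j) by lra.
  move/ler_wpM2l => /(_ _ _ hQ); nra.
have h6 : `|mu - mu0| * Pa <= eps * Pa by apply: ler_wpM2r => //; exact: ltW.
have h7 : eps * Pa < eps * (Pa + 1) by rewrite ltr_pM2l //; lra.
have h8 : 4 * (r i + r j) * (eps * (Pa + 1)) = r i * r j * h ^+ 2.
  rewrite /eps; field; apply/andP; split; apply: lt0r_neq0; lra.
have h9 : 0 < 4 * (r i + r j) by lra.
have := ler_wpM2l (ltW h9) h6.
have := ltr_pM2l h9 (eps * Pa) (eps * (Pa + 1)); rewrite h7 => /esym h10.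
nra.
Qed.

Lemma part_sum {R : realType} {m K : nat} (c : 'I_m -> 'I_K) (r : 'I_m -> R) (F : 'I_K -> R) :
  \sum_(i < m) r i * F (c i) = \sum_(k < K) red_weight c r k * F k.
Proof.
rewrite (partition_big c xpredT) //=; apply: eq_bigr => k _.
rewrite /red_weight mulr_suml; apply: eq_bigr => i /eqP <-; done.
Qed.

Lemma Pen_sym {R : realType} {m d : nat} (w : 'I_m -> R) (x : 'I_m -> 'rV[R]_d) :
  Pen w x = \sum_(i < m) \sum_(j < m) 2^-1 * (w i * w j * enorm (x i - x j)).
Proof.
rewrite -sym_pairs; last by move=> i; rewrite subrr enorm0 !mulr0.
apply: eq_bigr => i _; apply: eq_bigr => j _.
by rewrite -(opprB (x i)) enormN; field.
Qed.

Lemma Pen_red {R : realType} {n K d : nat} (c : 'I_n -> 'I_K) (r : 'I_n -> R)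
  (w : 'I_K -> 'rV[R]_d) :
  Pen r (fun i => w (c i)) = Pen (red_weight c r) w.
Proof.
rewrite !Pen_sym.
transitivity (\sum_(i < n) r i * (\sum_(k' < K) red_weight c r k' *
                 (2^-1 * enorm (w (c i) - w k')))).
  apply: eq_bigr => i _.
  rewrite -(part_sum c r (fun k' => 2^-1 * enorm (w (c i) - w k'))) mulr_sumr.
  by apply: eq_bigr => j _; ring.
rewrite (part_sum c r (fun k => \sum_(k' < K) red_weight c r k' *
                 (2^-1 * enorm (w k - w k')))).
apply: eq_bigr => k _; rewrite mulr_sumr; apply: eq_bigr => k' _; ring.
Qed.

Definition C0 {R : realType} {n K d : nat} (c : 'I_n -> 'I_K) (r : 'I_n -> R)
  (a : 'I_n -> 'rV[R]_d) : R :=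
  \sum_(k < K) (\sum_(i < n | c i == k) r i * sq (a i)
                - red_weight c r k * sq (red_center c r a k)).

Lemma Dq_red {R : realType} {n K d : nat} (c : 'I_n -> 'I_K) (r : 'I_n -> R)
  (a : 'I_n -> 'rV[R]_d) (w : 'I_K -> 'rV[R]_d) :
  (forall k, red_weight c r k != 0) ->
  Dq a r (fun i => w (c i)) = Dq (red_center c r a) (red_weight c r) w + C0 c r a.
Proof.
move=> hW.
rewrite /Dq /C0 -big_split /= (partition_big c xpredT) //=; apply: eq_bigr => k _.
transitivity (\sum_(i < n | c i == k) (r i * sq (w k) - 2 * dot (w k) (r i *: a i)
                + r i * sq (a i))).
  by apply: eq_bigr => i /eqP ->; rewrite sqB dotZr; ring.
rewrite big_split sumrB /= -[X in _ - X + _]mulr_sumr -dot_sumr -mulr_suml -/(red_weight c r k).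
have hS : \sum_(i < n | c i == k) r i *: a i = red_weight c r k *: red_center c r a k.
  by rewrite /red_center scalerA mulfV // scale1r.
rewrite hS dotZr sqB; ring.
Qed.

Lemma obj_red {R : realType} {n K d : nat} (c : 'I_n -> 'I_K) (r : 'I_n -> R)
  (a : 'I_n -> 'rV[R]_d) (lam : R) (w : 'I_K -> 'rV[R]_d) :
  (forall k, red_weight c r k != 0) ->
  cc_obj a r lam (fun i => w (c i)) =
  cc_obj (red_center c r a) (red_weight c r) lam w + 2^-1 * C0 c r a.
Proof.
move=> hW; rewrite !cc_objE Dq_red // Pen_red; ring.
Qed.

Lemma obj_ext {R : realType} {m d : nat} (y : 'I_m -> 'rV[R]_d) w lam (x z : 'I_m -> 'rV[R]_d) :
  (forall i, x i = z i) -> cc_obj y w lam x = cc_obj y w lam z.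
Proof.
move=> h; rewrite !cc_objE /Dq /Pen.
by congr (_ * _ + _ * _); apply: eq_bigr => i _; rewrite ?h //; apply: eq_bigr => j _; rewrite !h.
Qed.

Theorem lemma6p3 (R : realType) (n d : nat) (hn : (2 <= n)%N) (hd : (1 <= d)%N)
  (a : 'I_n -> 'rV[R]_d) (r : 'I_n -> R) (hr : forall i, 0 < r i)
  (xstar : R -> 'I_n -> 'rV[R]_d)
  (hxstar : forall lam, 0 <= lam -> is_cc_min a r lam (xstar lam))
  (lam : R) (hlam : 0 < lam) (hnf : ~ is_fusion_value xstar lam)
  (lam1 : R)
  (hlam1 : (lam1 = 0 /\ forall mu, 0 < mu -> mu < lam -> ~ is_fusion_value xstar mu)
        \/ (is_fusion_value xstar lam1 /\ lam1 < lam /\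
            forall mu, lam1 < mu -> mu < lam -> ~ is_fusion_value xstar mu))
  (K : nat) (c : 'I_n -> 'I_K) (hcsurj : forall k : 'I_K, exists i, c i = k)
  (hc : forall i j, c i = c j <-> xstar lam1 i = xstar lam1 j)
  (xhat : 'I_K -> 'rV[R]_d)
  (hxhat : is_cc_min (red_center c r a) (red_weight c r) lam xhat) :
  forall k k' : 'I_K, k != k' -> xhat k <> xhat k'.
Proof.
move=> k k' hkk'.
have hr0 : forall i, 0 <= r i by move=> i; exact/ltW.
have [hl1a hl1b] : 0 <= lam1 /\ lam1 < lam.
  case: hlam1 => [[-> _]|[[h _] [h2 _]]]; split => //; exact: ltW.
have nosp : forall mu mu', 0 <= mu -> mu <= mu' -> forall i j,
    xstar mu i = xstar mu j -> xstar mu' i = xstar mu' j.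
  move=> mu mu' h1 h2; apply: (nosplit a r hr mu mu') => //; apply: hxstar => //.
  exact: le_trans h2.
set y := xstar lam.
have hB : forall i j, c i = c j -> y i = y j.
  by move=> i j /hc; apply: nosp => //; exact: ltW.
have hC : forall i j, c i <> c j -> y i <> y j.
  move=> i j hcij hyij.
  have hx1 : xstar lam1 i <> xstar lam1 j by move/hc.
  pose S := [set mu : R | lam1 <= mu /\ mu <= lam /\ xstar mu i = xstar mu j]%classic.
  have Slam : S lam by split; [exact: ltW|split].
  have Slb : lbound S lam1 by move=> mu [].
  have Sinf : has_inf S by split; [exists lam | exists lam1].
  set mu0 := inf S.
  have lb : lam1 <= mu0 by apply: lb_le_inf => //; exists lam.
  have ub : mu0 <= lam by apply: (ge_inf (Sinf.2)).
  have mu00 : 0 <= mu0 by apply: le_trans lb.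
  have fus0 : xstar mu0 i = xstar mu0 j.
    have [//|hne] := eqVneq (xstar mu0 i) (xstar mu0 j).
    have hne' : xstar mu0 i <> xstar mu0 j by move/eqP; rewrite (negPf hne).
    have [eps epos heps] := sep a r hr xstar hxstar i j mu0 mu00 hne'.
    have [s Ss hs] := inf_adherent epos Sinf.
    have hs0 : mu0 <= s by apply: (ge_inf Sinf.2).
    case: Ss => h1 [h2 h3].
    by exfalso; apply: (heps s) => //; [exact: le_trans h1 | lra].
  have lt1 : lam1 < mu0.
    rewrite lt_neqAle lb andbT; apply/eqP => e; apply: hx1.
    by rewrite e.
  have fv : is_fusion_value xstar mu0.
    split; first by lra.
    exists i, j; split.
      by apply/eqP => e; apply: hcij; rewrite e.
    split => // mu hmu hlt hfus.
    have [le|gt] := leP lam1 mu.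
      have : S mu by split => //; split => //; lra.
      move/(ge_inf Sinf.2); rewrite -/mu0; lra.
    by apply: hx1; apply: (nosp mu lam1) => //; exact: ltW.
  have [e|ne] := eqVneq mu0 lam; first by apply: hnf; rewrite -e.
  have lt2 : mu0 < lam by rewrite lt_neqAle ne ub.
  case: hlam1 => [[e h]|[_ [_ h]]].
    by apply: (h mu0) => //; lra.
  by apply: (h mu0).
have hf : forall k, exists i, c i == k.
  by move=> k0; have [i hi] := hcsurj k0; exists i; rewrite hi.
pose f k0 := xchoose (hf k0).
have cf : forall k0, c (f k0) = k0 by move=> k0; apply/eqP; exact: (xchooseP (hf k0)).
pose yh k0 := y (f k0).
have ylift : forall i, y i = yh (c i) by move=> i; apply: hB; rewrite cf.
have hW : forall k0, red_weight c r k0 != 0.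
  move=> k0; apply: lt0r_neq0; rewrite /red_weight (bigD1 (f k0)) /=; last by rewrite cf.
  apply: (lt_le_trans (hr (f k0))); rewrite lerDl.
  by apply: sumr_ge0 => i _; exact: hr0.
have h1 := hxhat yh.
have h2 : cc_obj a r lam (fun i => xhat (c i)) <= cc_obj a r lam y.
  rewrite (obj_ext a r lam y (fun i => yh (c i))); last exact: ylift.
  rewrite (obj_red c r a lam xhat hW) (obj_red c r a lam yh hW).
  by rewrite lerD2r.
have h3 := strong_cvx a r lam y hr0 (ltW hlam) (hxstar lam (ltW hlam)) (fun i => xhat (c i)).
have hQ : Qd r y (fun i => xhat (c i)) <= 0.
  have := Qd_ge0 r y (fun i => xhat (c i)) hr0.
  set Q := Qd r y _ in h3 *; set F1 := cc_obj a r lam _ in h2 h3; set F2 := cc_obj a r lam y in h2 h3.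
  move=> _.
  have h4 : Q / 4 <= 0 by apply: le_trans h3 _; rewrite subr_le0.
  by move: h4; rewrite pmulr_lle0 // invr_gt0 ltr0n.
have hl := Qd_eq0 _ _ _ hr hQ.
move=> ekk.
have e1 : xhat k = y (f k) by rewrite -(hl (f k)) /= cf.
have e2 : xhat k' = y (f k') by rewrite -(hl (f k')) /= cf.
apply: (hC (f k) (f k')); last by rewrite -e1 -e2.
by rewrite !cf; apply/eqP.
Qed.
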